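(* Let $T\subseteq V$ be any set and $\tilde C\subseteq C$ a nonempty set of colors, and define $\tilde f_c(A)=f_c(A\cup T)$ for $A\subseteq V$, $c\in\tilde C$. For integers $b\ge 0$ let $\widetilde{\mathrm{OPT}}_b=\max_{S\subseteq V,\,|S|\le b}\min_{c\in\tilde C}\tilde f_c(S)$. Let $\gamma>0$ be such that $\tilde f_c(v\mid\emptyset)\le\gamma\,\widetilde{\mathrm{OPT}}_B$ for all $v\in V$ and $c\in\tilde C$. Then for every positive integer $\tilde B\le B$, \[ \widetilde{\mathrm{OPT}}_{\tilde B}\;\ge\;\left(1-\sqrt{3\gamma\frac{B}{\tilde B}\log k}\right)\frac{\tilde B}{B}\,\widetilde{\mathrm{OPT}}_B . \]
   Context: Setup: $V$ is a finite nonempty ground set, $C$ is a finite nonempty set of ''colors'', $k=|C|$. For each $c\in C$, $f_c\colon 2^V\to\mathbb{R}_{\ge 0}$ is monotone and submodular. $B$ is a positive integer (the budget). $f(T\mid S)=f(S\cup T)-f(S)$ and $f(v\mid S)=f(\{v\}\mid S)$. $\log$ is the natural logarithm. *)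

(* Defs.v *)
From HB Require Import structures.
From mathcomp Require Import all_boot all_order all_algebra.
From mathcomp Require Export all_boot all_order all_algebra.
From mathcomp Require Import reals exp.
From mathcomp Require Export reals exp.
Set Implicit Arguments. Unset Strict Implicit. Unset Printing Implicit Defensive.
Import Order.TTheory GRing.Theory Num.Theory.
Local Open Scope ring_scope.

Definition monotone_set_fun (R : realType) (V : finType) (g : {set V} -> R) :=
  forall A B : {set V}, A \subset B -> g A <= g B.

Definition submodular_set_fun (R : realType) (V : finType) (g : {set V} -> R) :=
  forall A B : {set V}, g (A :|: B) + g (A :&: B) <= g A + g B.

(* min_{c in Ct} h c, for a nonempty set Ct (value 0 if Ct is empty, never used). *)
Definition min_over (R : realType) (C : finType) (Ct : {set C}) (h : C -> R) : R :=
  match [pick c in Ct] with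
  | Some c0 => \big[Num.min/h c0]_(c in Ct) h c
  | None => 0
  end.

Definition max_card_le (R : realType) (V : finType) (b : nat) (g : {set V} -> R) : R :=
  \big[Num.max/g set0]_(S : {set V} | (#|S| <= b)%N) g S.

Definition ftilde (R : realType) (V C : finType) (f : C -> {set V} -> R)
  (T : {set V}) (c : C) (A : {set V}) : R := f c (A :|: T).

Definition OPTt (R : realType) (V C : finType) (f : C -> {set V} -> R)
  (T : {set V}) (Ct : {set C}) (b : nat) : R :=
  max_card_le b (fun S => min_over Ct (fun c => ftilde f T c S)).

(* Main.v *)
Require Import Defs.
From HB Require Import structures.
From mathcomp Require Import all_boot all_order all_algebra.
From mathcomp Require Import reals sequences exp.
From mathcomp Require Import ring lra.
Import Order.TTheory GRing.Theory Num.Theory.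
Set Implicit Arguments. Unset Strict Implicit. Unset Printing Implicit Defensive.
Local Open Scope ring_scope.

Lemma expN_poly (R : realType) (y : R) : 0 <= y ->
  expR (- y) <= 1 - y + 2 / 3 * y ^+ 2.
Proof.
move=> y0.
have hA : (1 + y / 3) ^+ 3 <= expR y.
  have -> : y = 3%:R * (y / 3) by field.
  rewrite expRM_natl; rewrite (_ : 3%:R * (y/3) / 3 = y / 3); last by field.
  apply: lerXn2r; rewrite ?nnegrE; [lra| exact: expR_ge0 | ].
  have := expR_ge1Dx (y / 3); lra.
have Apos : 0 < (1 + y / 3) ^+ 3 by apply: exprn_gt0; lra.
rewrite expRN.
have h1 : 1 <= (1 + y / 3) ^+ 3 * (1 - y + 2 / 3 * y ^+ 2).
  have e : (1 + y / 3) ^+ 3 * (1 - y + 2 / 3 * y ^+ 2) =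
    1 + y ^+ 3 * (10/27 + 5/27 * y + 2/81 * y^+2) by rewrite !exprS !expr0; field.
  rewrite e; have : 0 <= y ^+ 3 * (10/27 + 5/27 * y + 2/81 * y^+2).
    apply: mulr_ge0; first exact: exprn_ge0.
    have : 0 <= y^+2 by exact: exprn_ge0. lra.
  lra.
have h2 : (expR y)^-1 <= ((1 + y / 3) ^+ 3)^-1.
  by rewrite lef_pV2 // posrE ?expR_gt0.
apply: (le_trans h2).
rewrite -[X in X <= _]mulr1.
apply: (le_trans (ler_wpM2l _ h1)); first by rewrite invr_ge0 ltW.
by rewrite mulrA mulVf ?mul1r // gt_eqF.
Qed.

Lemma avg_exists (R : realType) (I : finType) (U : {set I}) (g : I -> R) (x : R) :
  U != set0 -> \sum_(v in U) g v <= #|U|%:R * x -> exists v, v \in U /\ g v <= x.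
Proof.
move=> U0 hs.
case: (boolP [exists v in U, g v <= x]) => [/exists_inP [v vU h]| /exists_inPn hn].
  by exists v.
have : \sum_(v in U) x < \sum_(v in U) g v.
  apply: ltr_sum.
    by case/set0Pn: U0 => v vU; apply/hasP; exists v; rewrite ?mem_index_enum.
  by move=> v vU; rewrite ltNge; apply: hn.
by rewrite sumr_const -mulr_natl ltNge hs.
Qed.

Lemma descent (R : realType) (I : finType) (P : nat -> {set I} -> R) (Bt : nat) :
  (forall t (S : {set I}), #|S| = t -> (t < Bt)%N ->
     exists v, v \notin S /\ P t.+1 (v |: S) <= P t S) ->
  exists S : {set I}, #|S| = Bt /\ P Bt S <= P 0%N set0.
Proof.
move=> hstep.
suff H : forall t, (t <= Bt)%N -> exists S : {set I}, #|S| = t /\ P t S <= P 0%N set0.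
  exact: H.
elim=> [|t IH] ht; first by exists set0; rewrite cards0.
have [S [hS hP]] := IH (ltnW ht).
have [v [vS hv]] := hstep t S hS ht.
exists (v |: S); split; first by rewrite cardsU1 vS hS.
exact: le_trans hv hP.
Qed.

Lemma sum_exp_bound (R : realType) (I : finType) (U : {set I}) (g : I -> R) (x : R) :
  U != set0 -> 0 <= x -> (forall i, 0 <= g i <= 1) ->
  \sum_(v in U) expR (- (x * g v)) <=
    #|U|%:R * expR ((- x + 2/3 * x^+2) * (\sum_(v in U) g v) / #|U|%:R).
Proof.
move=> U0 x0 g01.
have Upos : 0 < #|U|%:R :> R by rewrite ltr0n card_gt0.
apply: (le_trans (y := \sum_(v in U) (1 + (- x + 2/3 * x^+2) * g v))).
  apply: ler_sum => v _.
  have [g0 g1] := andP (g01 v).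
  apply: le_trans; first exact: (expN_poly (mulr_ge0 x0 g0)).
  have : (x * g v)^+2 <= x^+2 * g v.
    rewrite exprMn ler_wpM2l ?exprn_ge0 // expr2.
    by rewrite -[X in _ <= X]mulr1 ler_wpM2l.
  lra.
rewrite big_split /= sumr_const -mulr_sumr.
set G := \sum_(v in U) g v.
have -> : 1 *+ #|U| + (- x + 2 / 3 * x ^+ 2) * G =
  #|U|%:R * (1 + (- x + 2/3 * x^+2) * G / #|U|%:R).
  by field; rewrite gt_eqF.
apply: ler_wpM2l; first exact: ltW.
exact: expR_ge1Dx.
Qed.

Definition Xf (R : realType) (N Tb W : R) (t : nat) (s : R) :=
  s + (Tb - t%:R) * (W - s) / (N - t%:R).
Definition Vf (R : realType) (lam N Tb W : R) (t : nat) :=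
  2/3 * lam^+2 * W * (Tb - t%:R) / (N - t%:R).

Lemma Xf_step (R : realType) (N Tb W : R) (t : nat) (s a : R) :
  N - t%:R - 1 != 0 -> N - t%:R != 0 ->
  Xf N Tb W t.+1 (s + a) =
  Xf N Tb W t s + (N - Tb) / (N - t%:R - 1) * (a - (W - s) / (N - t%:R)).
Proof.
move=> h1 h2; rewrite /Xf -natr1.
have h1' : N - (t%:R + 1) != 0 by rewrite opprD addrA.
by field; rewrite h1 h2.
Qed.

Lemma Vf_step (R : realType) (lam N Tb W A : R) (t : nat) :
  0 <= A <= W -> t%:R + 1 <= Tb -> Tb < N ->
  Vf lam N Tb W t.+1 +
    2/3 * lam^+2 * ((N - Tb) / (N - t%:R - 1))^+2 * (A / (N - t%:R))
  <= Vf lam N Tb W t.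
Proof.
move=> /andP [A0 AW] ht hTN.
set d1 := N - t%:R; set d2 := N - t%:R - 1; set q := N - Tb.
have d2p : 0 < d2 by rewrite /d2; lra.
have d1p : 0 < d1 by rewrite /d1; lra.
have qp : 0 < q by rewrite /q; lra.
have qd2 : q <= d2 by rewrite /q /d2; lra.
set cc := q / d2.
have cc0 : 0 <= cc by rewrite /cc divr_ge0 // ltW.
have cc1 : cc <= 1 by rewrite /cc ler_pdivrMr // mul1r.
have hdiff : Vf lam N Tb W t - Vf lam N Tb W t.+1 = 2/3 * lam^+2 * (cc * W / d1).
  rewrite /Vf -natr1 /cc /d1 /d2 /q.
  have h1' : N - (t%:R + 1) != 0 by rewrite opprD addrA; apply/lt0r_neq0.
  field; apply/andP; split; apply: lt0r_neq0; [exact: d1p| exact: d2p].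
have key : cc ^+ 2 * (A / d1) <= cc * W / d1.
  have h : cc^+2 * A <= cc * W.
    rewrite expr2 -mulrA; apply: ler_wpM2l => //.
    by apply: (le_trans _ AW); rewrite ler_piMl.
  by rewrite mulrA ler_pM2r ?invr_gt0.
have l0 : 0 <= 2/3 * lam^+2 by apply: mulr_ge0; [lra | exact: sqr_ge0].
have := ler_wpM2l l0 key.
have -> : 2 / 3 * lam ^+ 2 * cc ^+ 2 * (A / d1) = 2 / 3 * lam ^+ 2 * (cc ^+ 2 * (A / d1)).
  by rewrite !mulrA.
lra.
Qed.

Lemma conc (R : realType) (I K : finType) (Kt : {set K}) (w : K -> I -> R) (Bt : nat) (lam : R) :
  (forall c i, 0 <= w c i <= 1) -> 0 < lam -> (Bt < #|I|)%N ->
  exists S : {set I}, #|S| = Bt /\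
    \sum_(c in Kt) expR (lam * (Bt%:R * (\sum_i w c i) / #|I|%:R) - lam * \sum_(i in S) w c i)
    <= \sum_(c in Kt) expR (2/3 * lam^+2 * (Bt%:R * (\sum_i w c i) / #|I|%:R)).
Proof.
move=> w01 lam0 hBtI.
pose N : R := #|I|%:R; pose Tb : R := Bt%:R.
pose W c := \sum_i w c i.
pose mu c := Tb * W c / N.
pose P t (S : {set I}) := \sum_(c in Kt)
  expR (lam * mu c - lam * Xf N Tb (W c) t (\sum_(i in S) w c i) + Vf lam N Tb (W c) t).
have hNTb : Tb < N by rewrite ltr_nat.
have Wge0 : forall c (S : {set I}), 0 <= \sum_(i in S) w c i.
  by move=> c S; apply: sumr_ge0 => i _; case/andP: (w01 c i).
have [S [hS hP]] : exists S : {set I}, #|S| = Bt /\ P Bt S <= P 0%N set0.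
  apply: descent => t S hS htB.
  pose U := ~: S.
  have hU : #|U|%:R = N - t%:R :> R.
    by rewrite /N -(cardsC S) natrD hS; ring.
  have htN : (t.+1 < #|I|)%N by apply: leq_ltn_trans hBtI.
  have U0 : U != set0.
    by rewrite -card_gt0 -(ltr_nat R) hU subr_gt0 ltr_nat; apply: ltn_trans htN.
  suff hsum : \sum_(v in U) P t.+1 (v |: S) <= #|U|%:R * P t S.
    have [v [vU hv]] := avg_exists U0 hsum.
    by exists v; rewrite -in_setC.
  rewrite /P exchange_big /= mulr_sumr; apply: ler_sum => c _.
  set s := \sum_(i in S) w c i.
  set A := \sum_(i in U) w c i.
  have hA : A = W c - s.
    rewrite /W (bigID (mem S)) /= /s /A; rewrite addrC addrK.
    by apply: eq_bigl => i; rewrite in_setC.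
  have A0 : 0 <= A by exact: Wge0.
  have s0 : 0 <= s by exact: Wge0.
  set d1 := N - t%:R; set d2 := N - t%:R - 1.
  have ht1 : t%:R + 1 <= Tb by rewrite natr1 /Tb ler_nat.
  have d2p : 0 < d2 by rewrite /d2; lra.
  have d1p : 0 < d1 by rewrite /d1; lra.
  set cc := (N - Tb) / d2.
  have cc0 : 0 <= cc by apply: divr_ge0; [rewrite subr_ge0 ltW | exact: ltW].
  set x := lam * cc.
  have x0 : 0 <= x by rewrite /x mulr_ge0 // ltW.
  set E := lam * mu c - lam * Xf N Tb (W c) t s + lam * cc * ((W c - s) / d1)
    + Vf lam N Tb (W c) t.+1.
  have e1 : forall v, v \in U ->
    expR (lam * mu c - lam * Xf N Tb (W c) t.+1 (\sum_(i0 in v |: S) w c i0) +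
        Vf lam N Tb (W c) t.+1) = expR E * expR (- (x * w c v)).
    move=> v vU; rewrite big_setU1 -?in_setC //= -/s addrC Xf_step; last 2 first.
    - exact: lt0r_neq0.
    - exact: lt0r_neq0.
    by rewrite -expRD /E /x -/d1 -/d2 -/cc; congr expR; ring.
  rewrite (eq_bigr _ e1) -mulr_sumr.
  apply: le_trans.
    apply: ler_wpM2l; first exact: expR_ge0.
    apply: sum_exp_bound => //.
  rewrite mulrCA; apply: ler_wpM2l; first by rewrite hU ltW.
  rewrite -expRD ler_expR -/A hU -/d1.
  have AW : 0 <= A <= W c by apply/andP; split => //; lra.
  have vs := Vf_step lam AW ht1 hNTb.
  rewrite -/d1 -/d2 -/cc in vs.
  have eq : lam * cc * (A / d1) + (- x + 2 / 3 * x ^+ 2) * A / d1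
      = 2 / 3 * lam ^+ 2 * cc ^+ 2 * (A / d1).
    by rewrite /x; field; apply: lt0r_neq0.
  rewrite /E -hA; lra.
exists S; split => //.
apply: le_trans (le_trans hP _).
  rewrite le_eqVlt; apply/orP; left; apply/eqP; rewrite /P; apply: eq_bigr => c _; congr expR.
  by rewrite /Xf /Vf /mu /W /Tb /N subrr; ring.
rewrite le_eqVlt; apply/orP; left; apply/eqP; rewrite /P; apply: eq_bigr => c _; congr expR.
rewrite big_set0 /Xf /Vf /mu /W /Tb /N subr0 !subr0 add0r; ring.
Qed.

Lemma submod_marg (R : realType) (V : finType) (g : {set V} -> R) (A B : {set V}) (x : V) :
  submodular_set_fun g -> A \subset B -> x \notin B ->
  g (x |: B) - g B <= g (x |: A) - g A.
Proof.
move=> hsub AB xB.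
have := hsub (x |: A) B.
have -> : (x |: A) :|: B = x |: B.
  by apply/setP => y; rewrite !inE; case: (y \in A) (subsetP AB y) => [->|]; rewrite ?orbT // orbF.
have -> : (x |: A) :&: B = A.
  apply/setP => y; rewrite !inE; case: (y =P x) => [->|_] /=.
    rewrite (negbTE xB) /=; by apply/esym/negP => /(subsetP AB) xB'; rewrite xB' in xB.
  by case yA: (y \in A) => //=; rewrite (subsetP AB y yA).
move=> ?; lra.
Qed.

Definition Qset (V : finType) (S : {set V}) (j : nat) : {set V} :=
  [set u in S | (enum_rank u < j)%N].

Definition chainw (R : realType) (V : finType) (g : {set V} -> R) (S : {set V}) (v : V) : R :=
  if v \in S then g (v |: Qset S (enum_rank v)) - g (Qset S (enum_rank v)) else 0.

Lemma chain_main (R : realType) (V : finType) (g : {set V} -> R) (S : {set V}) :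
  monotone_set_fun g -> submodular_set_fun g ->
  forall j, (forall Rs : {set V}, Rs \subset Qset S j -> g set0 + \sum_(v in Rs) chainw g S v <= g Rs)
     /\ g (Qset S j) = g set0 + \sum_(v in Qset S j) chainw g S v.
Proof.
move=> hmono hsub; elim=> [|j [IH1 IH2]].
  have Q0 : Qset S 0 = set0 by apply/setP => y; rewrite !inE andbF.
  rewrite Q0 big_set0 addr0; split => // Rs; rewrite subset0 => /eqP ->.
  by rewrite big_set0 addr0.
case: (pickP [pred u | (u \in S) && (enum_rank u == j :> nat)]) => [u /andP [uS /eqP ru] | hn].
  have QS : Qset S j.+1 = u |: Qset S j.
    apply/setP => y; rewrite !inE ltnS leq_eqVlt.
    case: (y =P u) => [->|yu] /=; first by rewrite uS ru eqxx.
    case: (enum_rank y =P j :> nat) => //= ry; rewrite ?orbF //.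
    exfalso; apply: yu; apply: enum_rank_inj; apply: val_inj; by rewrite /= ry ru.
  have uQ : u \notin Qset S j by rewrite !inE ru ltnn andbF.
  have au : chainw g S u = g (u |: Qset S j) - g (Qset S j) by rewrite /chainw uS ru.
  rewrite QS; split; last by rewrite big_setU1 //= au; lra.
  move=> Rs hRs.
  case uR: (u \in Rs).
    have RsD : Rs = u |: (Rs :\ u) by rewrite setD1K.
    have hR' : Rs :\ u \subset Qset S j.
      apply/subsetP => y; rewrite !inE => /andP [yu yR].
      by have := subsetP hRs y yR; rewrite !inE (negbTE yu).
    have uR' : u \notin Rs :\ u by rewrite !inE eqxx.
    rewrite RsD big_setU1 //= -RsD.
    have h1 := IH1 _ hR'.
    have h2 := submod_marg hsub hR' uQ.
    rewrite -RsD in h2; lra.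
  apply: IH1; apply/subsetP => y yR; have := subsetP hRs y yR; rewrite !inE.
  by case: (y =P u) => [yu|] //=; rewrite yu uR in yR.
have QS : Qset S j.+1 = Qset S j.
  apply/setP => y; rewrite !inE ltnS leq_eqVlt.
  case yS: (y \in S) => //=.
  case: (enum_rank y =P j :> nat) => //= ry.
  by have := hn y; rewrite /= yS ry eqxx.
by rewrite QS.
Qed.

Lemma Qset_full (V : finType) (S : {set V}) : Qset S #|V| = S.
Proof. by apply/setP => y; rewrite !inE ltn_ord andbT. Qed.

Lemma chain_lower (R : realType) (V : finType) (g : {set V} -> R) (S Rs : {set V}) :
  monotone_set_fun g -> submodular_set_fun g -> Rs \subset S ->
  g set0 + \sum_(v in Rs) chainw g S v <= g Rs.
Proof.
move=> hm hs hR; have [h _] := chain_main S hm hs #|V|.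
by apply: h; rewrite Qset_full.
Qed.

Lemma chain_total (R : realType) (V : finType) (g : {set V} -> R) (S : {set V}) :
  monotone_set_fun g -> submodular_set_fun g ->
  g S = g set0 + \sum_(v in S) chainw g S v.
Proof.
move=> hm hs; have [_ h] := chain_main S hm hs #|V|.
by rewrite Qset_full in h.
Qed.

Lemma chain_bounds (R : realType) (V : finType) (g : {set V} -> R) (S : {set V}) v :
  monotone_set_fun g -> submodular_set_fun g ->
  0 <= chainw g S v <= g [set v] - g set0.
Proof.
move=> hm hs; rewrite /chainw.
have h0 : 0 <= g [set v] - g set0 by rewrite subr_ge0; apply: hm; exact: sub0set.
case: (v \in S); last by rewrite lexx h0.
have vQ : v \notin Qset S (enum_rank v) by rewrite !inE ltnn andbF.
apply/andP; split.
  by rewrite subr_ge0; apply: hm; exact: subsetUr.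
have := submod_marg hs (sub0set (Qset S (enum_rank v))) vQ.
by rewrite setU0.
Qed.

Lemma bigmin_le_seq (R : realType) (I : eqType) (r : seq I) (P : pred I) (F : I -> R) x0 c :
  c \in r -> P c -> \big[Num.min/x0]_(i <- r | P i) F i <= F c.
Proof.
elim: r => [|a r IH] //; rewrite inE big_cons => /orP [/eqP <- Pc|cr Pc].
  by rewrite Pc ge_min lexx.
case: (P a); last exact: IH.
by rewrite ge_min IH ?orbT.
Qed.

Lemma bigmax_ge_seq (R : realType) (I : eqType) (r : seq I) (P : pred I) (F : I -> R) x0 c :
  c \in r -> P c -> F c <= \big[Num.max/x0]_(i <- r | P i) F i.
Proof.
elim: r => [|a r IH] //; rewrite inE big_cons => /orP [/eqP <- Pc|cr Pc].
  by rewrite Pc le_max lexx.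
case: (P a); last exact: IH.
by rewrite le_max IH ?orbT.
Qed.

Lemma minover_le (R : realType) (C : finType) (Ct : {set C}) (h : C -> R) c :
  c \in Ct -> min_over Ct h <= h c.
Proof.
move=> cC; rewrite /min_over; case: pickP => [c0 _|hn]; last by rewrite hn in cC.
by apply: bigmin_le_seq; rewrite ?mem_index_enum.
Qed.

Lemma minover_ge (R : realType) (C : finType) (Ct : {set C}) (h : C -> R) y :
  Ct != set0 -> (forall c, c \in Ct -> y <= h c) -> y <= min_over Ct h.
Proof.
move=> /set0Pn [c1 c1C] hy; rewrite /min_over; case: pickP => [c0 c0C|hn]; last by rewrite hn in c1C.
apply: (big_ind (fun z => y <= z)); [exact: hy | | exact: hy].
by move=> a b ha hb; rewrite le_min ha hb.
Qed.

Lemma maxcard_ge (R : realType) (V : finType) (b : nat) (g : {set V} -> R) (S : {set V}) :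
  (#|S| <= b)%N -> g S <= max_card_le b g.
Proof. by move=> hS; apply: bigmax_ge_seq; rewrite ?mem_index_enum. Qed.

Lemma maxcard_ex (R : realType) (V : finType) (b : nat) (g : {set V} -> R) :
  exists S : {set V}, (#|S| <= b)%N /\ max_card_le b g = g S.
Proof.
rewrite /max_card_le.
apply: (big_ind (fun z => exists S : {set V}, (#|S| <= b)%N /\ z = g S)).
- by exists set0; rewrite cards0.
- move=> x y [S1 [h1 ->]] [S2 [h2 ->]].
  have [h|h] := leP (g S1) (g S2).
    by exists S2.
  by exists S1.
- by move=> S hS; exists S.
Qed.

Unset Implicit Arguments.

Theorem lemma6 (R : realType) (V C : finType) (f : C -> {set V} -> R) (B : nat)
  (hV : (0 < #|V|)%N) (hC : (0 < #|C|)%N)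
  (f_nonneg : forall c A, 0 <= f c A)
  (f_mono : forall c, monotone_set_fun (f c))
  (f_sub : forall c, submodular_set_fun (f c))
  (hB : (0 < B)%N)
  (T : {set V}) (Ct : {set C}) (hCt : Ct != set0)
  (gamma : R) (hgamma : 0 < gamma)
  (hsmall : forall v c, c \in Ct ->
     ftilde f T c [set v] - ftilde f T c set0 <= gamma * OPTt f T Ct B)
  (Bt : nat) (hBt0 : (0 < Bt)%N) (hBtB : (Bt <= B)%N) :
  OPTt f T Ct Bt >=
    (1 - Num.sqrt (3 * gamma * (B%:R / Bt%:R) * ln (#|C|%:R : R)))
      * (Bt%:R / B%:R) * OPTt f T Ct B.
Proof.
have gm : forall c, monotone_set_fun (ftilde f T c).
  by move=> c A B' AB; rewrite /ftilde; apply: f_mono; exact: setSU.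
have gs : forall c, submodular_set_fun (ftilde f T c).
  move=> c A B'; rewrite /ftilde.
  have := f_sub c (A :|: T) (B' :|: T).
  rewrite (_ : (A :|: T) :|: (B' :|: T) = (A :|: B') :|: T); last first.
    by apply/setP=> y; rewrite !inE; case: (y \in A); case: (y \in B'); case: (y \in T).
  rewrite (_ : (A :|: T) :&: (B' :|: T) = (A :&: B') :|: T) //.
  by apply/setP=> y; rewrite !inE; case: (y \in A); case: (y \in B'); case: (y \in T).
have gnn : forall c A, 0 <= ftilde f T c A by move=> c A; exact: f_nonneg.
set O := OPTt f T Ct B.
have [Sopt [hSopt hO]] := maxcard_ex B (fun S => min_over Ct (fun c => ftilde f T c S)).
have hOc : forall c, c \in Ct -> O <= ftilde f T c Sopt.
  by move=> c cC; rewrite /O /OPTt hO; exact: minover_le.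
have OPTlb : forall b (Rs : {set V}), (#|Rs| <= b)%N ->
    min_over Ct (fun c => ftilde f T c Rs) <= OPTt f T Ct b.
  by move=> b Rs hR; exact: maxcard_ge.
have mo_nn : forall Rs, 0 <= min_over Ct (fun c => ftilde f T c Rs).
  by move=> Rs; apply: minover_ge.
have O0 : 0 <= O by rewrite /O /OPTt hO.
have OPT0 : 0 <= OPTt f T Ct Bt.
  by apply: le_trans (OPTlb Bt set0 _); rewrite ?cards0.
set L := ln (#|C|%:R : R).
have L0 : 0 <= L by apply: ln_ge0; rewrite ler1n.
set d := Num.sqrt _.
have d0 : 0 <= d by exact: sqrtr_ge0.
have Bpos : 0 < B%:R :> R by rewrite ltr0n.
have Btpos : 0 < Bt%:R :> R by rewrite ltr0n.
have BtB : Bt%:R <= B%:R :> R by rewrite ler_nat.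
set beta := Bt%:R / B%:R.
have beta0 : 0 <= beta by apply: divr_ge0; apply: ltW.
have beta1 : beta <= 1 by rewrite /beta ler_pdivrMr // mul1r.
have [hd|hd] := leP 1 d.
  apply: le_trans OPT0; rewrite -mulrA; apply: mulr_le0_ge0; first by lra.
  exact: mulr_ge0.
have [Oz|Opos] : O = 0 \/ 0 < O by move: O0; rewrite le0r => /orP [/eqP|]; [left|right].
  by rewrite Oz mulr0.
have [hsm|hbig] := leqP #|Sopt| Bt.
  apply: le_trans (OPTlb Bt Sopt hsm); rewrite -hO -/(OPTt f T Ct B) -/O.
  apply: ler_piMl => //; apply: mulr_ile1 => //; lra.
have hnBt := hbig.
pose I : finType := {x : V | x \in Sopt}.
have cardI : #|I| = #|Sopt|.
  by rewrite card_sig; apply: eq_card => x; rewrite inE.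
have hnB : (#|Sopt| <= B)%N := hSopt.
set u := gamma * O.
have upos : 0 < u by apply: mulr_gt0.
pose a c v := chainw (ftilde f T c) Sopt v.
have a_b : forall c v, c \in Ct -> 0 <= a c v <= u.
  move=> c v cC; have /andP [h1 h2] := chain_bounds Sopt v (gm c) (gs c).
  by rewrite h1 /=; apply: le_trans h2 _; exact: hsmall.
pose w0 c (x : I) := a c (val x) / u.
pose Tot c := \sum_(x : I) w0 c x.
pose Cap : R := #|I|%:R / (B%:R * gamma).
pose Tc c := Num.min (Tot c) Cap.
pose w c x := if c \in Ct then w0 c x * (Tc c / Tot c) else 0.
have hsumS : forall (F : V -> R) (SI : {set I}),
    \sum_(x in SI) F (val x) = \sum_(v in [set val x | x in SI]) F v.
  by move=> F SI; rewrite big_imset //; move=> x y _ _; exact: val_inj.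
have imT : [set val x | x in [set: I]] = Sopt.
  apply/setP => y; apply/imsetP/idP => [[x _ ->]|yS]; first exact: (valP x).
  by exists (exist _ y yS).
have hsumI : forall (F : V -> R), \sum_(x : I) F (val x) = \sum_(v in Sopt) F v.
  move=> F; rewrite (eq_bigl (fun x => x \in [set: I])); last by move=> x; rewrite inE.
  by rewrite hsumS; apply: eq_bigl => v; rewrite imT.
have w0_b : forall c x, c \in Ct -> 0 <= w0 c x <= 1.
  move=> c x cC; have /andP [h1 h2] := a_b c (val x) cC.
  rewrite /w0 divr_ge0 ?(ltW upos) //= ler_pdivrMr // mul1r //.
have Tot0 : forall c, c \in Ct -> 0 <= Tot c.
  by move=> c cC; apply: sumr_ge0 => x _; case/andP: (w0_b c x cC).
have Cap_pos : 0 < Cap.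
  apply: divr_gt0; last exact: mulr_gt0.
  by rewrite ltr0n cardI; apply: leq_ltn_trans hnBt.
have ratio : forall c, c \in Ct ->
    0 <= Tc c / Tot c <= 1 /\ Tot c * (Tc c / Tot c) = Tc c.
  move=> c cC; have [Tz|Tp] : Tot c = 0 \/ 0 < Tot c.
      by move: (Tot0 c cC); rewrite le0r => /orP [/eqP|]; [left|right].
    have -> : Tc c = 0 by rewrite /Tc Tz min_l // ltW.
    by rewrite Tz mul0r lexx ler01 mul0r.
  have Tc0 : 0 <= Tc c by rewrite /Tc le_min (ltW Tp) (ltW Cap_pos).
  have Tc1 : Tc c <= Tot c by rewrite /Tc ge_min lexx.
  split; last by rewrite mulrC divfK // gt_eqF.
  by rewrite divr_ge0 ?(ltW Tp) //= ler_pdivrMr // mul1r.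
have w01 : forall c x, 0 <= w c x <= 1.
  move=> c x; rewrite /w; case cC: (c \in Ct); last by rewrite lexx ler01.
  have [/andP [r0 r1] _] := ratio c cC; have /andP [h0 h1] := w0_b c x cC.
  rewrite mulr_ge0 //=; apply: le_trans h1; exact: ler_piMr.
have wle : forall c x, c \in Ct -> w c x <= w0 c x.
  move=> c x cC; rewrite /w cC; have [/andP [r0 r1] _] := ratio c cC.
  by have /andP [h0 h1] := w0_b c x cC; apply: ler_piMr.
have wsum : forall c, c \in Ct -> \sum_x w c x = Tc c.
  move=> c cC; have [_ <-] := ratio c cC; rewrite /Tot mulr_suml.
  by apply: eq_bigr => x _; rewrite /w cC.
set M := Bt%:R / (B%:R * gamma).
have key : forall lam, 0 < lam -> u * (M - L / lam - 2/3 * lam * M) <= OPTt f T Ct Bt.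
  move=> lam lam0.
  have hBtI : (Bt < #|I|)%N by rewrite cardI.
  have [SI [hSI hexp]] := conc Ct w01 lam0 hBtI.
  pose Rv := [set val x | x in SI].
  have cardRv : (#|Rv| <= Bt)%N by rewrite -hSI; exact: leq_imset_card.
  have RvS : Rv \subset Sopt.
    by apply/subsetP => y /imsetP [x _ ->]; exact: (valP x).
  have nI0 : 0 < #|I|%:R :> R by rewrite ltr0n cardI; apply: leq_ltn_trans hnBt.
  have muM : forall c, c \in Ct -> Bt%:R * (\sum_i w c i) / #|I|%:R <= M.
    move=> c cC; rewrite wsum //.
    have -> : M = Bt%:R * Cap / #|I|%:R by rewrite /M /Cap; field; rewrite !gt_eqF.
    rewrite ler_pM2r ?invr_gt0 // ler_pM2l // /Tc ge_min lexx orbT //.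
  apply: le_trans (OPTlb Bt Rv cardRv); apply: minover_ge => // c cC.
  set s := \sum_(i in SI) w c i.
  set mu := Bt%:R * (\sum_i w c i) / #|I|%:R.
  have step1 : expR (lam * mu - lam * s) <= #|C|%:R * expR (2/3 * lam^+2 * M).
    apply: le_trans (le_trans hexp _).
      rewrite (bigD1 c) //= lerDl; apply: sumr_ge0 => ? _; exact: expR_ge0.
    apply: (le_trans (y := \sum_(c0 in Ct) expR (2/3 * lam^+2 * M))).
      apply: ler_sum => c0 c0C; rewrite ler_expR; apply: ler_wpM2l; last exact: muM.
      by apply: mulr_ge0; [lra | exact: sqr_ge0].
    rewrite sumr_const -[expR _ *+ _]mulr_natl; apply: ler_wpM2r; first exact: expR_ge0.
    by rewrite ler_nat; exact: max_card.
  have step2 : lam * mu - lam * s <= L + 2/3 * lam^+2 * M.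
    rewrite -ler_expR expRD /L lnK //; rewrite posrE ltr0n //.
  have step3 : mu - L / lam - 2/3 * lam * M <= s.
    have : (mu - s - 2/3 * lam * M) * lam <= L.
      have -> : (mu - s - 2/3 * lam * M) * lam = lam * mu - lam * s - 2/3 * lam^+2 * M by ring.
      lra.
    rewrite -ler_pdivlMr // => h; lra.
  set e := ftilde f T c set0 / u.
  have e0 : 0 <= e by rewrite /e divr_ge0 // ltW.
  have hTot : u * Tot c = \sum_(v in Sopt) a c v.
    rewrite /Tot /w0 -hsumI mulr_sumr; apply: eq_bigr => x _.
    by rewrite mulrC divfK // gt_eqF.
  have htot := chain_total Sopt (gm c) (gs c).
  have eTot : 1 / gamma <= e + Tot c.
    have h1 : O <= u * (e + Tot c).
      rewrite mulrDr hTot /e mulrC divfK ?gt_eqF // -htot; exact: hOc.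
    rewrite -(ler_pM2l hgamma) mul1r mulfV ?gt_eqF // -(ler_pM2l Opos) mulr1.
    by rewrite mulrA [O * gamma]mulrC.
  have step4 : M <= e + mu.
    rewrite /mu wsum //.
    case: (boolP (Tot c <= Cap)) => hT.
      rewrite /Tc min_l //.
      have h2 : beta * Tot c <= Bt%:R * Tot c / #|I|%:R.
        rewrite /beta mulrAC.
        apply: ler_wpM2l; first by apply: mulr_ge0; [exact: ltW | exact: Tot0].
        by rewrite lef_pV2 ?posrE // ler_nat cardI.
      have h3 : beta * (e + Tot c) <= e + beta * Tot c.
        have : 0 <= e * (1 - beta) by apply: mulr_ge0; lra.
        have -> : e * (1 - beta) = e + beta * Tot c - beta * (e + Tot c) by ring.
        lra.
      have h4 : M <= beta * (e + Tot c).
        have -> : M = beta * (1 / gamma) by rewrite /M /beta; field; rewrite !gt_eqF.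
        exact: ler_wpM2l.
      lra.
    rewrite /Tc min_r; last by rewrite ltW // ltNge.
    have -> : Bt%:R * Cap / #|I|%:R = M by rewrite /M /Cap; field; rewrite !gt_eqF.
    lra.
  have step5 : ftilde f T c set0 + u * s <= ftilde f T c Rv.
    apply: le_trans (chain_lower (gm c) (gs c) RvS).
    rewrite lerD2l -hsumS /s mulr_sumr; apply: ler_sum => x _.
    have h := ler_wpM2l (ltW upos) (wle c x cC).
    apply: le_trans h _; rewrite /w0 /a mulrC divfK ?gt_eqF //.
  have ge : u * e = ftilde f T c set0 by rewrite /e mulrC divfK // gt_eqF.
  have : M - L / lam - 2/3 * lam * M <= e + s by lra.
  move/(ler_wpM2l (ltW upos)) => h; apply: le_trans h _.
  by rewrite mulrDr ge.
have uM : u * M = beta * O.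
  by rewrite /u /M /beta; field; rewrite !gt_eqF.
have Mpos : 0 < M by rewrite /M divr_gt0 // mulr_gt0.
have argge0 : 0 <= 3 * gamma * (B%:R / Bt%:R) * L.
  by apply: mulr_ge0 => //; apply: mulr_ge0; [apply: mulr_ge0; [lra|exact: ltW]| apply: divr_ge0; exact: ltW].
have [dz|dp] : d = 0 \/ 0 < d by move: d0; rewrite le0r => /orP [/eqP|]; [left|right].
  have Lz : L = 0.
    have : 3 * gamma * (B%:R / Bt%:R) * L <= 0 by rewrite -sqrtr_eq0 -/d dz.
    have cp : 0 < 3 * gamma * (B%:R / Bt%:R).
      by apply: mulr_gt0; [apply: mulr_gt0; lra | exact: divr_gt0].
    rewrite pmulr_rle0 // => h; lra.
  rewrite dz subr0 mul1r -uM leNgt; apply/negP => hlt.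
  set OP := OPTt f T Ct Bt in hlt *.
  have uMpos : 0 < u * M by apply: mulr_gt0.
  have lp : 0 < (u * M - OP) / (u * M) by apply: divr_gt0; lra.
  have := key _ lp; rewrite Lz mul0r subr0.
  have -> : u * (M - 2 / 3 * ((u * M - OP) / (u * M)) * M) = u * M - 2/3 * (u * M - OP).
    by field; rewrite !gt_eqF.
  rewrite -/OP; lra.
have dsq : d ^+ 2 = 3 * gamma * (B%:R / Bt%:R) * L by rewrite /d sqr_sqrtr.
have hL : L = d ^+ 2 * M / 3.
  by rewrite dsq /M; field; rewrite !gt_eqF.
have := key _ dp.
have -> : u * (M - L / d - 2 / 3 * d * M) = (1 - d) * (u * M).
  by rewrite hL; field; rewrite gt_eqF.
by rewrite uM mulrA.
Qed.
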